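(* Let $D\ge 2$, $T\ge 3$, $N\ge 3$ and let $S\in(\{0\}\cup\mathbb{N}\cup\{\infty\})^{T\times N}$. Suppose there are three distinct columns $j_1,j_2,j_3$ and three distinct rows $t_1,t_2,t_3$ such that each of the columns $j_1,j_2,j_3$ has finite entries only in rows among $t_1,t_2,t_3$, and the $3\times 3$ submatrix on rows $t_1,t_2,t_3$ and columns $j_1,j_2,j_3$ has the form $$\begin{pmatrix}\delta&\varepsilon&\infty\\ \zeta&\infty&\eta\\ \infty&\vartheta&\kappa\end{pmatrix}$$ with $\delta,\varepsilon,\zeta,\eta,\vartheta,\kappa$ finite. Then $S$ is not a $(T,N,D)$-tropical code.
   Context: Tropical arithmetic on $\mathbb{R}\cup\{\infty\}$: $x\oplus y=\min(x,y)$, $x\odot y=x+y$, with $x\oplus\infty=x$ and $x\odot\infty=\infty$. For a matrix $S$ with $T$ rows and $N$ columns and a column vector $\mathbf{x}$ of length $N$, $S\odot\mathbf{x}$ is the vector whose $t$-th entry is $\min_{j}(S_{tj}+x_j)$. A $(T,N,D)$-tropical code is a matrix $S\in(\{0\}\cup\mathbb{N}\cup\{\infty\})^{T\times N}$ such that for any two distinct vectors $\mathbf{x},\mathbf{y}\in(\{0\}\cup\mathbb{N}\cup\{\infty\})^{N}$, each having at most $D$ finite entries, $S\odot\mathbf{x}\ne S\odot\mathbf{y}$. *)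

(* Defs.v *)
(* Tropical values {0} ∪ N ∪ {∞} are modelled as [option nat],
   with [None] = ∞ and [Some n] = n. *)
From mathcomp Require Import all_boot all_algebra.
Set Implicit Arguments. Unset Strict Implicit. Unset Printing Implicit Defensive.

Definition trop := option nat.

Definition tplus (x y : trop) : trop :=
  match x, y with
  | None, _ => y
  | _, None => x
  | Some a, Some b => Some (minn a b)
  end.

Definition ttimes (x y : trop) : trop :=
  match x, y with
  | Some a, Some b => Some (a + b)
  | _, _ => None
  end.

Definition trop_mv (T N : nat) (S : 'M[trop]_(T, N)) (x : {ffun 'I_N -> trop})
  : {ffun 'I_T -> trop} :=
  [ffun t => foldr tplus None [seq ttimes (S t j) (x j) | j <- enum 'I_N]].

Definition nfinite (N : nat) (x : {ffun 'I_N -> trop}) : nat :=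
  #|[set j | x j != None]|.

Definition tropical_code (T N D : nat) (S : 'M[trop]_(T, N)) : Prop :=
  forall x y : {ffun 'I_N -> trop},
    nfinite x <= D -> nfinite y <= D -> x <> y -> trop_mv S x <> trop_mv S y.

(* Main.v *)
Require Import Defs.
From HB Require Import structures.
From mathcomp Require Import all_boot all_algebra.
From mathcomp Require Import zify.
Lemma tplusA : associative tplus. Proof. by case=> [a|] [b|] [c|] //=; rewrite minnA. Qed.
Lemma tplusC : commutative tplus. Proof. by case=> [a|] [b|] //=; rewrite minnC. Qed.
Lemma tplus0 : left_id None tplus. Proof. by case. Qed.
HB.instance Definition _ := Monoid.isComLaw.Build trop None tplus tplusA tplusC tplus0.

Lemma row_eval T N (S : 'M[trop]_(T, N)) (x : {ffun 'I_N -> trop}) (j1 j2 j3 : 'I_N) t :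
  [/\ j1 != j2, j1 != j3 & j2 != j3] ->
  (forall j, j \notin [:: j1; j2; j3] -> x j = None) ->
  trop_mv S x t = tplus (ttimes (S t j1) (x j1)) (tplus (ttimes (S t j2) (x j2)) (ttimes (S t j3) (x j3))).
Proof.
case=> n12 n13 n23 hx; rewrite ffunE foldrE big_map big_enum /=.
rewrite (bigD1 j1) //= (bigD1 j2) /=; last by rewrite eq_sym n12.
rewrite (bigD1 j3) /=; last by rewrite eq_sym n13 eq_sym n23.
rewrite big1 ?[tplus _ None]tplusC //= => j.
move=> /andP[/andP[a b] c]; rewrite hx; first by case: (S t j).
by rewrite !inE negb_or (negbTE a) (negbTE b) (negbTE c).
Qed.

Theorem mainTheorem5 (T N D : nat) (S : 'M[trop]_(T, N))
  (hD : 2 <= D) (hT : 3 <= T) (hN : 3 <= N)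
  (j1 j2 j3 : 'I_N) (t1 t2 t3 : 'I_T)
  (hj : [/\ j1 != j2, j1 != j3 & j2 != j3])
  (ht : [/\ t1 != t2, t1 != t3 & t2 != t3])
  (hsupp : forall (j : 'I_N) (t : 'I_T), j \in [:: j1; j2; j3] ->
             S t j != None -> t \in [:: t1; t2; t3])
  (h11 : S t1 j1 != None) (h12 : S t1 j2 != None) (h13 : S t1 j3 = None)
  (h21 : S t2 j1 != None) (h22 : S t2 j2 = None) (h23 : S t2 j3 != None)
  (h31 : S t3 j1 = None) (h32 : S t3 j2 != None) (h33 : S t3 j3 != None) :
  ~ tropical_code D S.
Proof.
have hj' := hj; case: hj' => n12 n13 n23.
case: ht => m12 m13 m23.
have f12 : (j1 == j2) = false by apply/negbTE.
have f13 : (j1 == j3) = false by apply/negbTE.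
have f23 : (j2 == j3) = false by apply/negbTE.
have f21 : (j2 == j1) = false by rewrite eq_sym.
have f31 : (j3 == j1) = false by rewrite eq_sym.
have f32 : (j3 == j2) = false by rewrite eq_sym.
case E11: (S t1 j1) h11 => [d|] // _.
case E12: (S t1 j2) h12 => [e|] // _.
case E21: (S t2 j1) h21 => [z|] // _.
case E23: (S t2 j3) h23 => [h|] // _.
case E32: (S t3 j2) h32 => [th|] // _.
case E33: (S t3 j3) h33 => [k|] // _.
pose M := d + z + th.
pose b := k + d + z.
pose x : {ffun 'I_N -> trop} :=
  [ffun j => if j == j1 then Some 0 else if j == j3 then Some M else None].
pose y : {ffun 'I_N -> trop} :=
  [ffun j => if j == j1 then Some 0 else if j == j2 then Some b else None].
have hx : forall j, j \notin [:: j1; j2; j3] -> x j = None.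
  by move=> j; rewrite !inE !negb_or => /and3P[a _ c]; rewrite ffunE (negbTE a) (negbTE c).
have hy : forall j, j \notin [:: j1; j2; j3] -> y j = None.
  by move=> j; rewrite !inE !negb_or => /and3P[a c _]; rewrite ffunE (negbTE a) (negbTE c).
move=> /(_ x y) H; apply: H.
- apply: leq_trans hD; rewrite /nfinite.
  apply: leq_trans (_ : #|[set j1; j3]| <= 2); last by rewrite cards2; case: (_ != _).
  apply: subset_leq_card; apply/subsetP => j; rewrite !inE ffunE.
  by case: (j == j1) => //; case: (j == j3).
- apply: leq_trans hD; rewrite /nfinite.
  apply: leq_trans (_ : #|[set j1; j2]| <= 2); last by rewrite cards2; case: (_ != _).
  apply: subset_leq_card; apply/subsetP => j; rewrite !inE ffunE.
  by case: (j == j1) => //; case: (j == j2).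
- move=> /ffunP/(_ j2); by rewrite !ffunE !eqxx f21 f23.
apply/ffunP => t; rewrite (@row_eval _ _ S x j1 j2 j3 t hj hx) (@row_eval _ _ S y j1 j2 j3 t hj hy).
have xv : [/\ x j1 = Some 0, x j2 = None & x j3 = Some M].
  by rewrite !ffunE !eqxx ?f21 ?f31 ?f23.
have yv : [/\ y j1 = Some 0, y j2 = Some b & y j3 = None].
  by rewrite !ffunE !eqxx ?f21 ?f31 ?f32.
case: xv yv => -> -> -> [-> -> ->].
have [->|nt1] := eqVneq t t1.
  rewrite E11 E12 h13 /=; congr Some.
  by apply/esym/minn_idPl; rewrite /b; lia.
have [->|nt2] := eqVneq t t2.
  rewrite E21 E23 h22 /=; congr Some.
  by apply/minn_idPl; rewrite /M; lia.
have [->|nt3] := eqVneq t t3.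
  by rewrite E32 E33 h31 /=; congr Some; rewrite /M /b; lia.
have hn : forall j, j \in [:: j1; j2; j3] -> S t j = None.
  move=> j hj0; apply/eqP; apply: contraT => hS.
  by have := hsupp j t hj0 hS; rewrite !inE (negbTE nt1) (negbTE nt2) (negbTE nt3).
by rewrite !hn // !inE eqxx ?orbT.
Qed.
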